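(* Let $\mathcal M=(S,L,\tau,\ell)$ be an LMC (possibly with infinitely many states) and $s,t\in S$ with $d(s,t)<1$. Then there exists a policy $T$ such that for every $\varepsilon>0$ there is $(u,v)\in S^2$ with $d(u,v)\le\varepsilon$ and $\mathcal R^T_{\mathcal M}((s,t),\{(u,v)\})>0$.
   Context: An LMC $\mathcal M=(S,L,\tau,\ell)$ has a nonempty countable state set $S$, finite label set $L$, finitely-branching transition function $\tau:S\to\mathrm{Distr}(S)$ and labelling $\ell$. The probabilistic bisimilarity distance $d$ is the least fixed point of $\Delta(e)(s,t)=1$ if $\ell(s)\ne\ell(t)$ and $\Delta(e)(s,t)=\min_{\omega\in\Omega(\tau(s),\tau(t))}\sum_{u,v}\omega(u,v)e(u,v)$ otherwise, where $\Omega(\mu,\nu)$ is the set of couplings (distributions on $S\times S$ with marginals $\mu,\nu$). Probabilistic bisimilarity $\sim$ is the largest equivalence $R$ on $S$ such that $(s,t)\in R$ implies $\ell(s)=\ell(t)$ and $\tau(s)(E)=\tau(t)(E)$ for every $R$-class $E$. Partition $S^2$ into $S^2_0=\{(s,t):s\sim t\}$, $S^2_1=\{(s,t):\ell(s)\ne\ell(t)\}$, $S^2_?=S^2\setminus(S^2_0\cup S^2_1)$. A policy is a map $T:S^2_?\to\mathrm{Distr}(S^2)$ with $T(s,t)\in\Omega(\tau(s),\tau(t))$. The Markov chain $\mathcal C^T_{\mathcal M}$ on $S^2$ has every pair in $S^2_0\cup S^2_1$ absorbing and from $(u,v)\in S^2_?$ moves to $(x,y)$ with probability $T(u,v)(x,y)$.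 $\mathcal R^T_{\mathcal M}((s,t),Z)$ is the probability that $\mathcal C^T_{\mathcal M}$ started in $(s,t)$ reaches $Z\subseteq S^2$. *)

(* Defs.v *)
From HB Require Import structures.
From mathcomp Require Import all_boot all_order all_algebra.
From mathcomp Require Import boolp classical_sets reals.
Set Implicit Arguments. Unset Strict Implicit. Unset Printing Implicit Defensive.
Import Order.TTheory GRing.Theory Num.Theory.
Local Open Scope ring_scope.
Local Open Scope classical_set_scope.

Section LMC.
Variables (R : realType) (S : countType) (L : finType).

(* A finitely-branching LMC: tau s is a probability distribution on S whose
   support is contained in the finite duplicate-free list supp s. *)
Definition is_lmc (tau : S -> S -> R) (supp : S -> seq S) : Prop :=
  forall s, [/\ uniq (supp s),
               (forall x, 0 <= tau s x),
               (forall x, tau s x != 0 -> x \in supp s) &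
               \sum_(x <- supp s) tau s x = 1].

(* Omega(mu, nu): couplings of mu (finite support list smu) and nu (list snu).
   Any coupling of finitely supported distributions is supported in
   smu x snu, so this requirement loses nothing. *)
Definition coupling (mu : S -> R) (smu : seq S) (nu : S -> R) (snu : seq S)
    (om : S * S -> R) : Prop :=
  [/\ (forall p, 0 <= om p),
      (forall p, om p != 0 -> (p.1 \in smu) && (p.2 \in snu)),
      (forall u, \sum_(v <- snu) om (u, v) = mu u) &
      (forall v, \sum_(u <- smu) om (u, v) = nu v)].

Definition cexp (smu snu : seq S) (om : S * S -> R) (e : S * S -> R) : R :=
  \sum_(u <- smu) \sum_(v <- snu) om (u, v) * e (u, v).

Variables (tau : S -> S -> R) (supp : S -> seq S) (lab : S -> L).

(* e is a fixed point of Delta (the min is spelled out: attained and a lower bound) *)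
Definition Delta_fixpoint (e : S * S -> R) : Prop :=
  forall s t,
    (lab s != lab t -> e (s, t) = 1) /\
    (lab s = lab t ->
      (exists om, coupling (tau s) (supp s) (tau t) (supp t) om /\
                  e (s, t) = cexp (supp s) (supp t) om e) /\
      (forall om, coupling (tau s) (supp s) (tau t) (supp t) om ->
                  e (s, t) <= cexp (supp s) (supp t) om e)).

Definition unit_valued (e : S * S -> R) : Prop := forall p, 0 <= e p <= 1.

Definition is_bisim_distance (d : S * S -> R) : Prop :=
  [/\ unit_valued d, Delta_fixpoint d &
      forall e, unit_valued e -> Delta_fixpoint e -> forall p, d p <= e p].

Definition prob_bisim (Rel : S -> S -> Prop) : Prop :=
  [/\ (forall x, Rel x x), (forall x y, Rel x y -> Rel y x),
      (forall x y z, Rel x y -> Rel y z -> Rel x z) &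
      forall s t, Rel s t ->
        lab s = lab t /\
        forall y, \sum_(x <- supp s | `[< Rel x y >]) tau s x =
                  \sum_(x <- supp t | `[< Rel x y >]) tau t x].

Definition bisimilar (s t : S) : Prop := exists Rel, prob_bisim Rel /\ Rel s t.

Definition S2q (p : S * S) : Prop := ~ bisimilar p.1 p.2 /\ lab p.1 = lab p.2.

Definition policy (T : S * S -> S * S -> R) : Prop :=
  forall p, S2q p -> coupling (tau p.1) (supp p.1) (tau p.2) (supp p.2) (T p).

Fixpoint reach_n (T : S * S -> S * S -> R) (Z : set (S * S)) (n : nat)
    (p : S * S) : R :=
  if `[< Z p >] then 1 else
  match n with
  | 0 => 0
  | n'.+1 =>
      if `[< S2q p >] then
        \sum_(u <- supp p.1) \sum_(v <- supp p.2) T p (u, v) * reach_n T Z n' (u, v)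
      else 0
  end.

Definition reach_prob (T : S * S -> S * S -> R) (Z : set (S * S)) (p : S * S) : R :=
  sup [set reach_n T Z n p | n in [set: nat]].

End LMC.

(* Main.v *)
Require Import Defs.
From HB Require Import structures.
From mathcomp Require Import all_boot all_order all_algebra.
From mathcomp Require Import boolp classical_sets reals topology normedtype matrix_normedtype derive.
From mathcomp Require Import ring lra.
Import Order.TTheory GRing.Theory Num.Theory.
Import numFieldTopology.Exports numFieldNormedType.Exports.
Local Open Scope ring_scope.
Local Open Scope classical_set_scope.
Set Implicit Arguments. Unset Strict Implicit. Unset Printing Implicit Defensive.

Lemma sum_ge_term (R : realType) (T : eqType) (s : seq T) (F : T -> R) x :
  (forall y, 0 <= F y) -> x \in s -> F x <= \sum_(y <- s) F y.
Proof.
move=> F0; elim: s => [//|y s IH]; rewrite inE big_cons => /orP[/eqP->|xs].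
  by rewrite lerDl sumr_ge0.
by rewrite (le_trans (IH xs)) // lerDr.
Qed.

Lemma cont_sum (R : realType) k (I : Type) (r : seq I) (F : I -> 'rV[R]_k -> R) :
  (forall i, continuous (F i)) -> continuous (fun x => \sum_(i <- r) F i x).
Proof.
move=> Fc; elim: r => [|i r IH].
  under eq_fun do rewrite big_nil; exact: cst_continuous.
under eq_fun do rewrite big_cons.
by move=> x; apply: continuousD; [exact: Fc|exact: IH].
Qed.

Section Attain.
Variables (R : realType) (S : countType).
Variables (mu nu : S -> R) (a b : seq S).
Hypotheses (ua : uniq a) (ub : uniq b) (mu0 : forall x, 0 <= mu x).

Let P := [seq (u, v) | u <- a, v <- b].
Let k := size P.

Definition omx (x : 'rV[R]_k) (p : S * S) : R :=
  \sum_(i < k) ((nth p P i == p)%:R * x ord0 i).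

Lemma uP : uniq P.
Proof. by apply: allpairs_uniq => // -[? ?] [? ?] _ _. Qed.

Lemma omx_out (x : 'rV[R]_k) p : p \notin P -> omx x p = 0.
Proof.
move=> pP; rewrite /omx big1 // => i _.
case: eqP => [e|_]; last by rewrite mul0r.
by move: pP; rewrite -e mem_nth.
Qed.

Lemma omx_ge0 (x : 'rV[R]_k) p : (forall i, 0 <= x ord0 i) -> 0 <= omx x p.
Proof. by move=> x0; apply: sumr_ge0 => i _; rewrite mulr_ge0. Qed.

Lemma omx_cont p : continuous (fun x => omx x p).
Proof.
rewrite /omx; apply: (cont_sum (F := fun (i : 'I_k) x => (nth p P i == p)%:R * x ord0 i)).
move=> i x.
apply: (@continuousM _ _ (fun=> (nth p P i == p)%:R) (fun y : 'rV[R]_k => y ord0 i)).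
  exact: cst_continuous.
exact: coord_continuous.
Qed.

Definition vec (om : S * S -> R) : 'rV[R]_k := \row_(i < k) om (tnth (in_tuple P) i).

Lemma omx_vec om p : omx (vec om) p = (count_mem p P)%:R * om p.
Proof.
rewrite /omx.
under eq_bigr => i _ do rewrite mxE (tnth_nth p) /=.
have -> : \sum_(i < k) ((nth p P i == p)%:R * om (nth p P i)) =
          \sum_(i < k) ((nth p P i == p)%:R * om p).
  by apply: eq_bigr => i _; case: eqP => [->|]; rewrite ?mul0r.
rewrite -big_distrl /=; congr (_ * _).
rewrite -(big_mkord xpredT (fun i => (nth p P i == p)%:R)).
rewrite -(big_nth p xpredT (fun q => (q == p)%:R)).
rewrite -natr_sum; congr (_ %:R).
by elim: (P) => [|q r IH]; rewrite ?big_nil ?big_cons //= IH.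
Qed.

Lemma omx_vec_coupling om : (forall p, om p != 0 -> (p.1 \in a) && (p.2 \in b)) ->
  omx (vec om) =1 om.
Proof.
move=> supp p; rewrite omx_vec count_uniq_mem ?uP //.
case: (boolP (p \in P)) => [|pP]; first by rewrite mul1r.
rewrite mul0r; apply/esym/eqP; apply: contraT => /supp /andP[h1 h2].
by move: pP; case: p h1 h2 => u v /= h1 h2; rewrite allpairs_f.
Qed.


Let B := \sum_(x <- a) mu x.
Let g (u : S) (x : 'rV[R]_k) := \sum_(v <- b) omx x (u, v).
Let h (v : S) (x : 'rV[R]_k) := \sum_(u <- a) omx x (u, v).

Let K : set 'rV[R]_k :=
  (\bigcap_(i in [set: 'I_k]) [set x : 'rV[R]_k | 0 <= x ord0 i]) `&`
  ((\bigcap_(i in [set: 'I_k]) [set x : 'rV[R]_k | x ord0 i <= B]) `&`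
  ((\bigcap_(u in [set: S]) [set x | g u x = mu u]) `&`
   (\bigcap_(v in [set: S]) [set x | h v x = nu v]))).

Lemma g_cont u : continuous (g u).
Proof. by apply: (cont_sum (F := fun v x => omx x (u, v))) => v; exact: omx_cont. Qed.
Lemma h_cont v : continuous (h v).
Proof. by apply: (cont_sum (F := fun u x => omx x (u, v))) => u; exact: omx_cont. Qed.

Lemma K_closed : closed K.
Proof.
apply: closedI; [|apply: closedI; [|apply: closedI]]; apply: closed_bigI => i _.
- have := @preimage_closed _ _ (fun x : 'rV[R]_k => x ord0 i) [set y : R | 0 <= y].
  move=> /(_ (fun y _ => @coord_continuous R 1 k ord0 i y) (@closed_ge R 0)).
  by [].
- have := @preimage_closed _ _ (fun x : 'rV[R]_k => x ord0 i) [set y : R | y <= B].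
  move=> /(_ (fun y _ => @coord_continuous R 1 k ord0 i y) (@closed_le R B)).
  by [].
- have := @preimage_closed _ _ (g i) [set y : R | y = mu i].
  by move=> /(_ (fun y _ => @g_cont i y) (@closed_eq R (mu i))).
- have := @preimage_closed _ _ (h i) [set y : R | y = nu i].
  by move=> /(_ (fun y _ => @h_cont i y) (@closed_eq R (nu i))).
Qed.

Lemma K_compact : compact K.
Proof.
have := @rV_compact _ k (fun _ => `[0, B]%classic) (fun _ => @segment_compact R 0 B).
move/(subclosed_compact K_closed); apply.
move=> x [x0 [xB _]] i /=; rewrite in_itv /=; apply/andP; split; [exact: x0|exact: xB].
Qed.

Lemma K_coup x : K x -> coupling mu a nu b (omx x).
Proof.
move=> [x0 [_ [xg xh]]]; split.
- by move=> p; apply: omx_ge0 => i; exact: x0.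
- move=> p; apply: contraR => pn; apply/eqP; apply: omx_out.
  by apply: contra pn => /allpairsP [[u v] [/= ua1 vb1 ->]]; apply/andP.
- by move=> u; exact: xg.
- by move=> v; exact: xh.
Qed.

Lemma K_vec om : coupling mu a nu b om -> K (vec om).
Proof.
move=> [om0 oms omu omv].
have E := omx_vec_coupling oms.
split; [|split; [|split]].
- by move=> i _ /=; rewrite mxE.
- move=> i _ /=; rewrite mxE.
  have : tnth (in_tuple P) i \in P by rewrite (tnth_nth (tnth (in_tuple P) i)) mem_nth.
  case: (tnth _ _) => u v /allpairsP [[u' v'] [/= ua' vb' [-> ->]]].
  apply: (le_trans (y := mu u')); last by apply: sum_ge_term.
  by rewrite -omu; apply: (sum_ge_term (F := fun v => om (u', v))).
- by move=> u _ /=; rewrite /g; under eq_bigr do rewrite E; exact: omu.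
- by move=> v _ /=; rewrite /h; under eq_bigr do rewrite E; exact: omv.
Qed.

Lemma coupling_attain (c : S * S -> R) om0 :
  coupling mu a nu b om0 ->
  exists om, coupling mu a nu b om /\
    forall om', coupling mu a nu b om' -> cexp a b om c <= cexp a b om' c.
Proof.
move=> h0.
have K0 : K !=set0 by exists (vec om0); exact: K_vec.
have fc : continuous (fun x => cexp a b (omx x) c).
  rewrite /cexp; apply: (cont_sum (F := fun u x => \sum_(v <- b) omx x (u, v) * c (u, v))) => u.
  apply: (cont_sum (F := fun v x => omx x (u, v) * c (u, v))) => v y.
  apply: (@continuousM _ _ (fun x => omx x (u, v)) (fun=> c (u, v))).
    exact: omx_cont.
  exact: cst_continuous.
have [x xK xmin] := compact_EVT_min K0 K_compact (continuous_subspaceT fc).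
exists (omx x); split; first by apply: K_coup; rewrite inE in xK.
move=> om' h'.
have E : cexp a b om' c = cexp a b (omx (vec om')) c.
  rewrite /cexp; apply: eq_bigr => u _; apply: eq_bigr => v _.
  by rewrite omx_vec_coupling //; case: h'.
by rewrite E; apply: xmin; rewrite inE; exact: K_vec.
Qed.
End Attain.

Section Main.
Variables (R : realType) (S : countType) (L : finType).
Variables (tau : S -> S -> R) (supp : S -> seq S) (lab : S -> L).
Hypothesis HM : is_lmc tau supp.

Local Notation cp p om := (coupling (tau p.1) (supp p.1) (tau p.2) (supp p.2) om).
Local Notation ce p om e := (cexp (supp p.1) (supp p.2) om e).

Lemma prod_coupling (p : S * S) : cp p (fun q => tau p.1 q.1 * tau p.2 q.2).
Proof.
have [_ t1 s1 m1] := HM p.1; have [_ t2 s2 m2] := HM p.2.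
split.
- by move=> q; rewrite mulr_ge0.
- move=> [u v] /=; rewrite mulf_eq0 negb_or => /andP[/s1 -> /s2 ->] //.
- by move=> u /=; rewrite -big_distrr /= m2 mulr1.
- by move=> v /=; rewrite -big_distrl /= m1 mul1r.
Qed.

Lemma attain (p : S * S) (e : S * S -> R) :
  exists om, cp p om /\ forall om', cp p om' -> ce p om e <= ce p om' e.
Proof.
have [u1 t1 _ _] := HM p.1; have [u2 _ _ _] := HM p.2.
exact: (coupling_attain u1 u2 t1 e (prod_coupling p)).
Qed.

Lemma cp_mass p om : cp p om ->
  \sum_(u <- supp p.1) \sum_(v <- supp p.2) om (u, v) = 1.
Proof.
move=> [_ _ r _]; under eq_bigr do rewrite r.
by have [] := HM p.1.
Qed.

Lemma ce_le_supp p om e e' : cp p om -> (forall q, om q != 0 -> e q <= e' q) ->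
  ce p om e <= ce p om e'.
Proof.
move=> [o0 _ _ _] H; rewrite /cexp; apply: ler_sum => u _; apply: ler_sum => v _.
have [->|nz] := eqVneq (om (u, v)) 0; first by rewrite !mul0r.
by rewrite ler_wpM2l // H.
Qed.

Lemma ce_le p om e e' : cp p om -> (forall q, e q <= e' q) -> ce p om e <= ce p om e'.
Proof. by move=> h H; apply: ce_le_supp => // q _; exact: H. Qed.

Lemma ce_affine p om e (al be : R) : cp p om ->
  ce p om (fun q => al * e q + be) = al * ce p om e + be.
Proof.
move=> h; rewrite /cexp.
transitivity (\sum_(u <- supp p.1) (al * \sum_(v <- supp p.2) om (u, v) * e (u, v)
   + be * \sum_(v <- supp p.2) om (u, v))).
  apply: eq_bigr => u _; rewrite !big_distrr -big_split /=.
  by apply: eq_bigr => v _; ring.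
by rewrite big_split /= -!big_distrr /= cp_mass // mulr1.
Qed.

Lemma ce_ge0 p om e : cp p om -> (forall q, 0 <= e q) -> 0 <= ce p om e.
Proof.
move=> [o0 _ _ _] H; apply: sumr_ge0 => u _; apply: sumr_ge0 => v _.
by rewrite mulr_ge0.
Qed.


Definition pre (x : S * S -> R) : Prop :=
  unit_valued x /\ forall p, (lab p.1 != lab p.2 -> x p = 1) /\
    (lab p.1 = lab p.2 -> exists om, cp p om /\ ce p om x <= x p).

Lemma tarski (e : S * S -> R) : pre e ->
  exists f, [/\ unit_valued f, Delta_fixpoint tau supp lab f & forall p, f p <= e p].
Proof.
move=> pe.
pose A p := [set x p | x in pre].
pose xs p := inf (A p).
have ne p : A p !=set0 by exists (e p), e.
have hl p : has_lbound (A p).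
  by exists 0 => _ [x [xu _] <-]; have /andP[] := xu p.
have xs_le x p : pre x -> xs p <= x p by move=> px; apply: ge_inf => //; exists x.
have xs_ge c p : (forall x, pre x -> c <= x p) -> c <= xs p.
  by move=> H; apply: lb_le_inf => // _ [x px <-]; exact: H.
have xs0 p : 0 <= xs p by apply: xs_ge => x [xu _]; have /andP[] := xu p.
have xs1 p : xs p <= 1 by apply: (le_trans (xs_le e p pe)); have [eu _] := pe; have /andP[] := eu p.
have xsl p : lab p.1 != lab p.2 -> xs p = 1.
  move=> hp; apply/eqP; rewrite eq_le xs1 /=; apply: xs_ge => x [_ xh].
  by have [h1 _] := xh p; rewrite h1.
pose omp p := projT1 (cid (attain p xs)).
have ompP p : cp p (omp p) /\ forall om', cp p om' -> ce p (omp p) xs <= ce p om' xs.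
  exact: (projT2 (cid (attain p xs))).
have m_le p : lab p.1 = lab p.2 -> ce p (omp p) xs <= xs p.
  move=> hp; apply: xs_ge => x px; have [_ xh] := px; have [_ /(_ hp) [om [omc omx]]] := xh p.
  have [_ mn] := ompP p.
  by apply: (le_trans (mn om omc)); apply: (le_trans _ omx); apply: ce_le => // q; exact: xs_le.
pose y p := if lab p.1 == lab p.2 then ce p (omp p) xs else 1.
have y_le p : y p <= xs p.
  rewrite /y; case: eqP => [/m_le //|/eqP /xsl ->]; exact: lexx.
have py : pre y.
  split.
    move=> p; rewrite /y; case: eqP => [hp|_]; last by rewrite ler01 lexx.
    rewrite ce_ge0 //=; [exact: (le_trans (m_le p hp))| by case: (ompP p)].
  move=> p; split; first by rewrite /y => /negPf ->.
  move=> hp; exists (omp p); split; first by case: (ompP p).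
  rewrite {2}/y hp eqxx; apply: ce_le => //; first by case: (ompP p).
have xsy p : lab p.1 = lab p.2 -> xs p = ce p (omp p) xs.
  move=> hp; apply/eqP; rewrite eq_le m_le // andbT.
  by have := xs_le y p py; rewrite /y hp eqxx.
exists xs; split.
- by move=> p; rewrite xs0 xs1.
- move=> p q; split; first exact: (xsl (p, q)).
  move=> hp; split; first by exists (omp (p, q)); split; [case: (ompP (p, q))|exact: (xsy (p, q))].
  by move=> om omc; rewrite (xsy (p, q) hp); have [_ ] := ompP (p, q); apply.
- by move=> p; exact: xs_le.
Qed.

Lemma d_le_pre d (Hd : is_bisim_distance tau supp lab d) e : pre e -> forall p, d p <= e p.
Proof.
move=> pe p; have [f [fu ff fe]] := tarski pe.
have [_ _ dl] := Hd; exact: (le_trans (dl f fu ff p) (fe p)).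
Qed.

Lemma bisim_lab x y : bisimilar tau supp lab x y -> lab x = lab y.
Proof. by move=> [Rel [[_ _ _ H] r]]; have [] := H _ _ r. Qed.

Lemma bisim_coupling p : bisimilar tau supp lab p.1 p.2 ->
  exists om, cp p om /\ forall q, om q != 0 -> bisimilar tau supp lab q.1 q.2.
Proof.
case: p => s t /= [Rel [[rf sy tr H] rst]].
have [_ mb] := H _ _ rst.
pose ms u := \sum_(x <- supp s | `[< Rel x u >]) tau s x.
pose mt u := \sum_(x <- supp t | `[< Rel x u >]) tau t x.
have [us ts ss ms1] := HM s; have [ut tt st mt1] := HM t.
have ms0 u : 0 <= ms u by apply: sumr_ge0.
have msz u : ms u = 0 -> tau s u = 0.
  move=> h; have [us'|nu] := boolP (u \in supp s).
    apply/eqP; rewrite eq_le ts andbT -h.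
    have := sum_ge_term (F := fun x => if `[< Rel x u >] then tau s x else 0) _ us'.
    rewrite -big_mkcond /= asboolT //; apply => y; case: ifP => // _; exact: ts.
  by apply/eqP; apply: contraT => /ss; rewrite (negPf nu).
have ms_cl u v : Rel u v -> ms u = ms v.
  move=> r; apply: eq_bigl => x; apply: asbool_equiv_eq; split => h.
    exact: tr h r.
  exact: tr h (sy _ _ r).
pose om (q : S * S) := if `[< Rel q.1 q.2 >] then tau s q.1 * tau t q.2 / ms q.1 else 0.
exists om; split; last first.
  move=> [u v]; rewrite /om /=; case: asboolP => [r _|_]; last by rewrite eqxx.
  by exists Rel; split => //; split.
split.
- move=> [u v]; rewrite /om /=; case: asboolP => // _.
  by rewrite divr_ge0 // mulr_ge0.
- move=> [u v]; rewrite /om /=; case: asboolP => _; last by rewrite eqxx.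
  by rewrite !mulf_eq0 !negb_or => /andP[/andP[/ss -> /st ->] _].
- move=> u /=; rewrite /om /=.
  have E : \sum_(v <- supp t) (if `[< Rel u v >] then tau s u * tau t v / ms u else 0)
      = tau s u / ms u * mt u.
    rewrite /mt big_distrr /= [RHS]big_mkcond /=; apply: eq_bigr => v _.
    have -> : `[< Rel v u >] = `[< Rel u v >] by apply: asbool_equiv_eq; split; exact: sy.
    by case: ifP => _; [rewrite mulrAC|].
  rewrite E /mt -mb -/(ms u).
  have [z|nz] := eqVneq (ms u) 0; first by rewrite msz // !mul0r.
  by rewrite mulrAC -mulrA divff // mulr1.
- move=> v /=; rewrite /om /=.
  have E : \sum_(u <- supp s) (if `[< Rel u v >] then tau s u * tau t v / ms u else 0)
      = tau t v / ms v * \sum_(u <- supp s | `[< Rel u v >]) tau s u.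
    rewrite big_distrr /= [RHS]big_mkcond /=; apply: eq_bigr => u _.
    case: asboolP => r //.
    rewrite (ms_cl _ _ r); ring.
  rewrite E -/(ms v).
  have [z|nz] := eqVneq (ms v) 0.
    have : mt v = 0 by rewrite /mt -mb -/(ms v).
    move=> mtz; have : tau t v = 0.
      have [vt|nv] := boolP (v \in supp t).
        apply/eqP; rewrite eq_le tt andbT -mtz.
        have := sum_ge_term (F := fun x => if `[< Rel x v >] then tau t x else 0) _ vt.
        rewrite -big_mkcond /= asboolT //; apply => y; case: ifP => // _; exact: tt.
      by apply/eqP; apply: contraT => /st; rewrite (negPf nv).
    by move=> ->; rewrite z !mul0r.
  by rewrite -mulrA mulVf // mulr1.
Qed.

Lemma sum_pos (T : eqType) (r : seq T) (F : T -> R) :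
  0 < \sum_(x <- r) F x -> exists2 x, x \in r & 0 < F x.
Proof.
elim: r => [|y r IH]; first by rewrite big_nil ltxx.
rewrite big_cons; have [Fy|Fy] := ltP 0 (F y).
  by move=> _; exists y => //; rewrite inE eqxx.
move=> h; have [|x xr Fx] := IH; first by lra.
by exists x => //; rewrite inE xr orbT.
Qed.

Section Reach.
Variable T : S * S -> S * S -> R.
Hypothesis HT : policy tau supp lab T.
Local Notation rn := (reach_n tau supp lab T).

Lemma reach_ge0 Z n p : 0 <= rn Z n p.
Proof.
elim: n p => [|n IH] p /=; case: asboolP => // _; rewrite ?ler01 ?lexx //.
case: asboolP => h //; have [t0 _ _ _] := HT h.
by apply: sumr_ge0 => u _; apply: sumr_ge0 => v _; rewrite mulr_ge0.
Qed.

Lemma reach_le1 Z n p : rn Z n p <= 1.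
Proof.
elim: n p => [|n IH] p /=; case: asboolP => // _; rewrite ?ler01 ?lexx //.
case: asboolP => h; last by rewrite ler01.
have hc := HT h; rewrite -(cp_mass hc).
apply: ler_sum => u _; apply: ler_sum => v _.
have [t0 _ _ _] := hc; by rewrite ler_piMr.
Qed.

Lemma reach_gen (q : S * S) m y (u v : S) : S2q tau supp lab y ->
  u \in supp y.1 -> v \in supp y.2 -> 0 < T y (u, v) ->
  0 < rn [set q] m (u, v) -> 0 < rn [set q] m.+1 y.
Proof.
move=> Sy uy vy Tuv ruv /=.
case: asboolP => _; first exact: ltr01.
rewrite (asboolT Sy).
have [t0 _ _ _] := HT Sy.
apply: (lt_le_trans _ (sum_ge_term (F := fun u' => \sum_(v' <- supp y.2) T y (u', v') * rn [set q] m (u', v')) _ uy)); last first.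
  by move=> u'; apply: sumr_ge0 => v' _; rewrite mulr_ge0 // reach_ge0.
apply: (lt_le_trans _ (sum_ge_term (F := fun v' => T y (u, v') * rn [set q] m (u, v')) _ vy)); last first.
  by move=> v'; rewrite mulr_ge0 // reach_ge0.
exact: mulr_gt0.
Qed.

Lemma reach_step (p q : S * S) : S2q tau supp lab p -> 0 < T p q ->
  forall n x, 0 < rn [set p] n x -> 0 < rn [set q] n.+1 x.
Proof.
case: q => q1 q2 Sp Tq.
have hc := HT Sp; have [t0 tsupp _ _] := hc.
have [qa qb] : q1 \in supp p.1 /\ q2 \in supp p.2.
  by have /andP[] := tsupp (q1, q2) (lt0r_neq0 Tq).
have rq m : 0 < rn [set (q1, q2)] m (q1, q2).
  by case: m => [|m] /=; rewrite asboolT // ltr01.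
elim=> [|n IH] x hx; have hx' := hx; rewrite /= in hx'.
  case: (pselect (x = p)) => [->|nxp]; first exact: (reach_gen Sp qa qb Tq (rq 0)).
  by rewrite (asboolF nxp) ltxx in hx'.
case: (pselect (x = p)) => [->|nxp]; first exact: (reach_gen Sp qa qb Tq (rq n.+1)).
rewrite (asboolF nxp) in hx'.
case: (pselect (S2q tau supp lab x)) => [Sx|nS]; last by rewrite (asboolF nS) ltxx in hx'.
rewrite (asboolT Sx) in hx'.
move: hx' => /sum_pos [u ux /sum_pos [v vx pos]].
have [tx0 _ _ _] := HT Sx.
have Tpos : 0 < T x (u, v).
  rewrite lt0r tx0 andbT; apply: contraTneq pos => ->; by rewrite mul0r ltxx.
have rpos : 0 < rn [set p] n (u, v).
  rewrite lt0r reach_ge0 andbT; apply: contraTneq pos => ->; by rewrite mulr0 ltxx.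
exact: (reach_gen Sx ux vx Tpos (IH _ rpos)).
Qed.

End Reach.

Lemma main_sec d (Hd : is_bisim_distance tau supp lab d) s t : d (s, t) < 1 ->
  exists T, policy tau supp lab T /\ forall eps : R, 0 < eps ->
    exists u v, d (u, v) <= eps /\ 0 < reach_prob tau supp lab T [set (u, v)] (s, t).
Proof.
move=> dst.
have [du dfix dleast] := Hd.
have dopt_ex p : exists om, lab p.1 = lab p.2 -> cp p om /\ d p = ce p om d.
  case: p => a b.
  case: (pselect (lab a = lab b)) => [h|h]; last by exists (fun=> 0).
  have [_ /(_ h) [[om [omc ome]] _]] := dfix a b.
  by exists om => _; split.
pose T p := projT1 (cid (dopt_ex p)).
have TP p : lab p.1 = lab p.2 -> cp p (T p) /\ d p = ce p (T p) d.
  exact: (projT2 (cid (dopt_ex p))).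
have HT : policy tau supp lab T by move=> p [_ h]; have [] := TP p h.
exists T; split => // eps eps0.
case: (pselect (exists u v, d (u, v) <= eps /\
   0 < reach_prob tau supp lab T [set (u, v)] (s, t))) => // H.
exfalso.
pose Rch q := exists n, 0 < reach_n tau supp lab T [set q] n (s, t).
have Rch_prob q : Rch q -> 0 < reach_prob tau supp lab T [set q] (s, t).
  move=> [n hn]; rewrite /reach_prob; apply: (lt_le_trans hn).
  have hub : has_ubound [set reach_n tau supp lab T [set q] n0 (s, t) | n0 in [set: nat]].
    by exists 1 => _ [m _ <-]; exact: reach_le1.
  by apply: (ub_le_sup hub); exists n.
have dgt q : Rch q -> eps < d q.
  move=> rq; rewrite ltNge; apply/negP => le; apply: H.
  by case: q rq le => u v rq le; exists u, v; split => //; exact: Rch_prob.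
have Rst : Rch (s, t) by exists 0%N; rewrite /= asboolT // ltr01.
have eps1 : eps < 1 by apply: lt_trans (dgt _ Rst) dst.
have Rstep p q : Rch p -> S2q tau supp lab p -> T p q != 0 -> Rch q.
  move=> [n hn] Sp Tq; exists n.+1; apply: (reach_step HT Sp _ hn).
  by have [t0 _ _ _] := HT _ Sp; rewrite lt0r Tq t0.
pose ph (x : R) := (x - eps) / (1 - eps).
have e1 : 0 < 1 - eps by rewrite subr_gt0.
have ph_aff x : ph x = (1 - eps)^-1 * x + (- (eps / (1 - eps))).
  by rewrite /ph mulrBl mulrC.
have ph1 : ph 1 = 1 by rewrite /ph divff // lt0r_neq0.
have ph_ge0 x : eps <= x -> 0 <= ph x.
  by move=> h; rewrite /ph divr_ge0 // ?subr_ge0 // ltW.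
have ph_le1 x : x <= 1 -> ph x <= 1.
  by move=> h; rewrite /ph ler_pdivrMr // mul1r; lra.
have ph_le x : 0 <= x <= 1 -> ph x <= x.
  move=> /andP[h0 h1]; rewrite /ph ler_pdivrMr //; nra.
pose e q := if `[< bisimilar tau supp lab q.1 q.2 >] then 0
            else if `[< Rch q >] then ph (d q) else d q.
have e_le_d q : e q <= d q.
  rewrite /e; case: asboolP => _; first by case/andP: (du q).
  case: asboolP => _ //; apply: ph_le; exact: du.
have e_le_ph q : Rch q -> e q <= ph (d q).
  move=> rq; rewrite /e; case: asboolP => _; first by apply: ph_ge0; apply: ltW; apply: dgt.
  by rewrite asboolT.
have pe : pre e.
  split.
    move=> q; rewrite /e; case: asboolP => _; first by rewrite lexx ler01.
    case: asboolP => rq; last exact: du.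
    apply/andP; split; first by apply: ph_ge0; apply/ltW/dgt.
    by apply: ph_le1; case/andP: (du q).
  move=> [a b]; split.
    move=> hl; have [dl _] := dfix a b; rewrite /e /=.
    case: asboolP => [/bisim_lab /eqP|_]; first by rewrite (negPf hl).
    by case: asboolP => _; rewrite (dl hl) ?ph1.
  move=> hl /=.
  case: (pselect (bisimilar tau supp lab a b)) => [bab|nb].
    have [om [omc omb]] := bisim_coupling (p := (a, b)) bab.
    exists om; split => //; rewrite {2}/e /= asboolT //.
    apply: sumr_le0 => u _; apply: sumr_le0 => v _.
    have [->|nz] := eqVneq (om (u, v)) 0; first by rewrite mul0r.
    by rewrite /e /= asboolT ?mulr0 //; exact: (omb (u, v) nz).
  have Sab : S2q tau supp lab (a, b) by split.
  have [Tc Td] := TP (a, b) hl.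
  exists (T (a, b)); split => //.
  case: (pselect (Rch (a, b))) => [rab|nr].
    rewrite {2}/e /= (asboolF nb) (asboolT rab).
    apply: (le_trans (ce_le_supp (e' := fun q => (1 - eps)^-1 * d q + - (eps / (1 - eps))) Tc _)).
      move=> q nz; rewrite -ph_aff; apply: e_le_ph; exact: Rstep rab Sab nz.
    by rewrite ce_affine // -Td -ph_aff.
  rewrite {2}/e /= (asboolF nb) (asboolF nr).
  rewrite [X in _ <= X]Td; exact: (ce_le (p := (a, b)) Tc e_le_d).
have := d_le_pre Hd pe (s, t).
rewrite /e /=; case: asboolP => [_ h|_].
  by have := dgt _ Rst; lra.
rewrite asboolT // /ph ler_pdivlMr // => h.
nra.
Qed.

End Main.

Theorem mainTheorem11 (R : realType) (S : countType) (L : finType)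
  (tau : S -> S -> R) (supp : S -> seq S) (lab : S -> L)
  (HM : is_lmc tau supp) (d : S * S -> R)
  (Hd : is_bisim_distance tau supp lab d) (s t : S) :
  d (s, t) < 1 ->
  exists T : S * S -> S * S -> R,
    policy tau supp lab T /\
    forall eps : R, 0 < eps ->
      exists u v : S, d (u, v) <= eps /\
        0 < reach_prob tau supp lab T [set (u, v)] (s, t).
Proof. exact: main_sec. Qed.
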